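(* There is no semi-equivelar map of type $(3^4,8)$ (four triangles and one octagon around each vertex, in this cyclic order) on the closed surface of Euler characteristic $-1$. *)

(* Defs.v *)
From HB Require Import structures.
From mathcomp Require Import all_boot all_order all_algebra.
Set Implicit Arguments. Unset Strict Implicit. Unset Printing Implicit Defensive.
Import GRing.Theory Num.Theory.

(* A face is a polygon given by its boundary cycle of vertices [v_0; ...; v_{k-1}].
   Its edges are the unordered pairs {v_i, v_{i+1 mod k}}. *)
Definition edges_of (V : finType) (f : seq V) : seq {set V} :=
  [seq [set p.1; p.2] | p <- zip f (rot 1 f)].

Definition face (V : finType) (F : seq (seq V)) (i : 'I_(size F)) : seq V :=
  nth [::] F i.

Definition is_edge (V : finType) (F : seq (seq V)) (e : {set V}) : bool :=
  has (fun f => e \in edges_of f) F.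

Definition edge_set (V : finType) (F : seq (seq V)) : {set {set V}} :=
  [set e | is_edge F e].

Definition adj_at (V : finType) (F : seq (seq V)) (v : V) : rel 'I_(size F) :=
  fun i j => [&& v \in face i, v \in face j &
     has (fun e : {set V} => (v \in e) && (e \in edges_of (face j))) (edges_of (face i))].

Definition vertex_adj (V : finType) (F : seq (seq V)) : rel V :=
  fun u w => (u != w) && is_edge F [set u; w].

(* F is a polyhedral map on a closed connected surface with vertex set V:
   faces are p-gons (p >= 3) with distinct vertices, every vertex lies in a face,
   every edge lies in exactly two faces, two distinct faces meet in nothing,
   a vertex or a common edge, the faces around each vertex form a single
   cycle (vertex links are circles), and the 1-skeleton is connected. *)
Definition polyhedral_map (V : finType) (F : seq (seq V)) : Prop :=
  (forall f, f \in F -> uniq f && (2 < size f)) /\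
  [/\ (forall v : V, has (fun f => v \in f) F),
      (forall f e, f \in F -> e \in edges_of f ->
          count (fun g => e \in edges_of g) F = 2),
      (forall i j : 'I_(size F), i != j ->
          (let A := [set x in face i] :&: [set x in face j] in
           A = set0 \/ #|A| = 1 \/ (A \in edges_of (face i) /\ A \in edges_of (face j)))),
      (forall (v : V) (i j : 'I_(size F)), v \in face i -> v \in face j ->
          connect (@adj_at V F v) i j)
    & (forall u w : V, connect (vertex_adj F) u w)].

Definition euler_char (V : finType) (F : seq (seq V)) : int :=
  (#|V|%:Z - #|edge_set F|%:Z + (size F)%:Z)%R.

Definition face_cycle (V : finType) (F : seq (seq V)) (v : V) (c : seq 'I_(size F)) : bool :=
  [&& uniq c, [forall i, (v \in face i) == (i \in c)] &
      all (fun p => @adj_at V F v p.1 p.2) (zip c (rot 1 c))].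

Definition semi_equivelar_of_type (V : finType) (F : seq (seq V)) (t : seq nat) : Prop :=
  forall v : V, exists c, @face_cycle V F v c /\
    exists k, [seq size (face i) | i <- c] = rot k t \/
              [seq size (face i) | i <- c] = rot k (rev t).

(* Main.v *)
Require Import Defs.
From HB Require Import structures.
From mathcomp Require Import all_boot all_order all_algebra all_fingroup.
From mathcomp Require Import zify.
From Stdlib Require Import ClassicalEpsilon.
Set Implicit Arguments. Unset Strict Implicit. Unset Printing Implicit Defensive.

Lemma count_card (T : Type) (P : pred T) (s : seq T) (x0 : T) :
  count P s = #|[set i : 'I_(size s) | P (nth x0 s i)]|.
Proof.
rewrite -sum1_card.
transitivity (\sum_(i < size s | P (nth x0 s i)) 1); last first.
  by apply: eq_bigl => i; rewrite inE.
elim: s => [|x s IH] /=; first by rewrite big_ord0.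
rewrite big_mkcond big_ord_recl /= IH big_mkcond /=; congr (_ + _).
Qed.

Lemma mod_neq j n : j < n -> 2 < n -> (j.+1 %% n) != ((j + n.-1) %% n).
move=> h1 h2.
case: (ltnP j.+1 n) => h.
  rewrite (modn_small h).
  case: j h1 h h2 => [|j] h1 h h2.
    rewrite add0n modn_small; lia.
  have -> : j.+1 + n.-1 = j + n by lia.
  rewrite modnDr modn_small; lia.
have -> : j + n.-1 = (n - 2) + n by lia.
have -> : j.+1 = n by lia.
rewrite modnn modnDr modn_small; lia.
Qed.

Lemma mod_cyc2 i j n : i < n -> j < n -> 2 < n -> i = j.+1 %% n -> i.+1 %% n = j -> False.
Proof.
move=> hi hj hn e1 e2.
case: (ltnP j.+1 n) => h.
  rewrite modn_small // in e1; subst i.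
  case: (ltnP j.+2 n) => h2; first by rewrite modn_small // in e2; lia.
  have e : j.+2 = n by lia.
  by move: e2; rewrite e modnn; lia.
have e : j.+1 = n by lia.
rewrite e modnn in e1; subst i.
by move: e2; rewrite modn_small; lia.
Qed.

Section Edges.
Variable V : finType.
Implicit Types (f : seq V) (e : {set V}).

Lemma nth_rot1 (x0 : V) f i : i < size f ->
  nth x0 (rot 1 f) i = nth x0 f (i.+1 %% size f).
Proof.
case: f => [|w f] //= lti.
rewrite /rot /= drop0 take0 nth_cat.
case: ltnP => hi.
  by rewrite modn_small //.
have -> : i = size f by lia.
by rewrite subnn /= modnn.
Qed.

Lemma edges_ofP (x0 : V) f e : e \in edges_of f ->
  exists2 i, i < size f & e = [set nth x0 f i; nth x0 f (i.+1 %% size f)].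
Proof.
rewrite /edges_of => /mapP [[p q]] /(nthP (x0, x0)) [i].
rewrite size_zip size_rot minnn => lti.
rewrite nth_zip ?size_rot // => -[<- <-] ->.
by exists i => //=; rewrite nth_rot1.
Qed.

Lemma edge_nth (x0 : V) f i : i < size f ->
  [set nth x0 f i; nth x0 f (i.+1 %% size f)] \in edges_of f.
Proof.
move=> lti; rewrite /edges_of.
apply/mapP; exists (nth x0 f i, nth x0 f (i.+1 %% size f)) => //.
rewrite -nth_rot1 // -nth_zip ?size_rot //.
by apply: mem_nth; rewrite size_zip size_rot minnn.
Qed.

Lemma edge_mem f e p : e \in edges_of f -> p \in e -> p \in f.
Proof.
case: f => [|x0 f']; first by [].
move=> /(edges_ofP x0) [i lti ->] /set2P [] ->;
by apply: mem_nth => //; rewrite ltn_mod.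
Qed.

Lemma edge_card f e : uniq f -> 1 < size f -> e \in edges_of f -> #|e| = 2.
Proof.
case: f => [|x0 f']; first by [].
set f := x0 :: f' => uf hs /(edges_ofP x0) [i lti ->].
have hm : i.+1 %% size f < size f by rewrite ltn_mod.
have hneq : i != i.+1 %% size f.
  case: (ltnP i.+1 (size f)) => h; first by rewrite modn_small //; lia.
  have -> : i.+1 = size f by lia.
  by rewrite modnn; lia.
by rewrite cards2 (nth_uniq x0 lti hm uf) hneq.
Qed.

Lemma edge_through (x0 : V) f e v : uniq f -> 2 < size f -> e \in edges_of f -> v \in e ->
  e = [set v; nth x0 f ((index v f).+1 %% size f)] \/
  e = [set v; nth x0 f ((index v f + (size f).-1) %% size f)].
Proof.
move=> uf hs he hv.
have vf : v \in f by apply: edge_mem he hv.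
move: he hv => /(edges_ofP x0) [i lti ->].
have lj : index v f < size f by rewrite index_mem.
have ev : nth x0 f (index v f) = v by apply: nth_index.
rewrite !inE => /orP[]/eqP hv.
  left; have : index v f = i.
    by apply/eqP; rewrite -(nth_uniq x0 lj lti uf) ev hv.
  by move=> <-; rewrite ev.
right.
have hi : i.+1 %% size f < size f by rewrite ltn_mod; lia.
have : index v f = i.+1 %% size f.
  by apply/eqP; rewrite -(nth_uniq x0 lj hi uf) ev hv.
move=> ej; rewrite -hv setUC; congr ([set _; nth _ _ _]).
rewrite ej.
case: (ltnP i.+1 (size f)) => h.
  rewrite (modn_small h).
  have -> : i.+1 + (size f).-1 = i + size f by lia.
  by rewrite modnDr modn_small.
have -> : i.+1 = size f by lia.
rewrite modnn add0n modn_small; lia.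
Qed.

Lemma edge_through_in (x0 : V) f v : uniq f -> 2 < size f -> v \in f ->
  [/\ [set v; nth x0 f ((index v f).+1 %% size f)] \in edges_of f,
      [set v; nth x0 f ((index v f + (size f).-1) %% size f)] \in edges_of f &
      nth x0 f ((index v f).+1 %% size f) != nth x0 f ((index v f + (size f).-1) %% size f)].
Proof.
move=> uf hs vf.
have lj : index v f < size f by rewrite index_mem.
have ev : nth x0 f (index v f) = v by apply: nth_index.
split.
- by rewrite -{1}ev edge_nth.
- have hk : (index v f + (size f).-1) %% size f < size f by rewrite ltn_mod; lia.
  have := edge_nth x0 hk.
  have -> : ((index v f + (size f).-1) %% size f).+1 %% size f = index v f.
    rewrite -addn1 modnDml -addnA addn1 prednK; last lia.
    by rewrite modnDr modn_small.
  by rewrite ev setUC.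
- rewrite nth_uniq ?ltn_mod //; try lia.
  exact: mod_neq.
Qed.

Lemma nth_edges (x0 : V) f i : i < size f ->
  nth set0 (edges_of f) i = [set nth x0 f i; nth x0 f (i.+1 %% size f)].
Proof.
move=> lti; rewrite /edges_of (nth_map (x0, x0)); last by rewrite size_zip size_rot minnn.
by rewrite nth_zip ?size_rot //= nth_rot1.
Qed.

Lemma size_edges f : size (edges_of f) = size f.
Proof. by rewrite /edges_of size_map size_zip size_rot minnn. Qed.

Lemma edges_uniq f : uniq f -> 2 < size f -> uniq (edges_of f).
Proof.
case: f => [|x0 f']; first by [].
set f := x0 :: f' => uf hs.
apply/(uniqP set0) => i j; rewrite !inE size_edges => hi hj.
rewrite !(nth_edges x0) //.
have hi1 : i.+1 %% size f < size f by rewrite ltn_mod.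
have hj1 : j.+1 %% size f < size f by rewrite ltn_mod.
have ne : nth x0 f i != nth x0 f (i.+1 %% size f).
  rewrite nth_uniq //.
  case: (ltnP i.+1 (size f)) => h; first by rewrite modn_small //; lia.
  have -> : i.+1 = size f by lia.
  by rewrite modnn; lia.
move=> e; have := e => /setP /(_ (nth x0 f i)); rewrite set21 !inE.
move=> /esym /orP [].
- by rewrite nth_uniq // => /eqP.
- rewrite nth_uniq // => /eqP e1.
  have := e => /setP /(_ (nth x0 f (i.+1 %% size f))); rewrite set22 !inE.
  move=> /esym /orP [].
  + rewrite nth_uniq // => /eqP e2; exfalso; apply: (mod_cyc2 hi hj hs e1 e2).
  + rewrite nth_uniq // => /eqP e2.
    have h : i.+1 %% size f = i by rewrite e2 -e1.
    case: (ltnP i.+1 (size f)) => hh; first by rewrite modn_small // in h; lia.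
    have ee : i.+1 = size f by lia.
    by rewrite ee modnn in h; lia.
Qed.

End Edges.

Lemma card2_split (T : finType) (e : {set T}) v : #|e| = 2 -> v \in e ->
  exists2 w, w != v & e = [set v; w].
Proof.
move=> he hv.
have : #|e :\ v| = 1 by rewrite (cardsD1 v e) hv in he; case: he.
move/eqP/cards1P => [w hw]; exists w.
  by apply/negP => /eqP ew; have := set11 w; rewrite -hw ew setD11.
by rewrite -hw setD1K.
Qed.

Lemma card3 (T : finType) (v p q : T) : v != p -> v != q -> p != q -> #|[set v; p; q]| = 3.
Proof.
move=> vp vq pq.
by rewrite -setUA cardsU1 cards2 !inE negb_or vp vq pq.
Qed.

Lemma set3_eqE (T : finType) (v p q : T) (A : {set T}) : #|A| = 3 ->
  v \in A -> p \in A -> q \in A -> v != p -> v != q -> p != q -> A = [set v; p; q].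
Proof.
move=> hA hv hp hq vp vq pq; apply/esym/eqP; rewrite eqEcard hA.
rewrite !subUset !sub1set hv hp hq /=.
by rewrite card3.
Qed.

Section Map.
Variables (V : finType) (F : seq (seq V)).
Hypothesis HP : polyhedral_map F.

Local Notation I := 'I_(size F).
Definition S (i : I) : {set V} := [set x in face i].

Lemma face_in (i : I) : face i \in F.
Proof. by rewrite /face mem_nth. Qed.

Lemma face_ok (i : I) : uniq (face i) /\ 2 < size (face i).
Proof. by case: HP => H _; have /andP[] := H _ (face_in i). Qed.

Lemma cardS (i : I) : #|S i| = size (face i).
Proof. by rewrite /S cardsE; apply/card_uniqP; case: (face_ok i). Qed.

Lemma edge_sub (i : I) e p : e \in edges_of (face i) -> p \in e -> p \in S i.
Proof. by move=> he hp; rewrite inE; apply: edge_mem he hp. Qed.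

Lemma edge_card2 (i : I) e : e \in edges_of (face i) -> #|e| = 2.
Proof. by case: (face_ok i) => u s; apply: edge_card => //; lia. Qed.

Lemma three_faces (i j k : I) e : i != j -> j != k -> i != k ->
  e \in edges_of (face i) -> e \in edges_of (face j) -> e \in edges_of (face k) -> False.
Proof.
move=> ij jk ik hi hj hk.
case: HP => _ [_ Hc _ _ _].
have := Hc _ _ (face_in i) hi; rewrite (count_card _ _ [::]).
set A := [set _ | _] => hA.
have : [set i; j; k] \subset A.
  by rewrite !subUset !sub1set !inE hi hj hk.
by move/subset_leq_card; rewrite hA card3.
Qed.

Lemma inter2 (i j : I) : i != j -> 1 < #|S i :&: S j| ->
  S i :&: S j \in edges_of (face i) /\ S i :&: S j \in edges_of (face j).
Proof.
move=> ij h.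
case: HP => _ [_ _ Hi _ _].
case: (Hi i j ij) => /= [h0|[h1|[]]] //.
  by move: h; rewrite /S h0 cards0.
by move: h; rewrite /S h1.
Qed.

Lemma inter3 (i j : I) p q r : i != j -> p != q -> p != r -> q != r ->
  p \in S i -> q \in S i -> r \in S i -> p \in S j -> q \in S j -> r \in S j -> False.
Proof.
move=> ij pq pr qr pi qi ri pj qj rj.
have hsub : [set p; q; r] \subset S i :&: S j.
  by rewrite !subUset !sub1set !in_setI pi qi ri pj qj rj.
have c3 : #|[set p; q; r]| = 3.
  by rewrite card3.
have := subset_leq_card hsub; rewrite c3 => h.
have [h1 _] := inter2 ij (leq_trans (isT : 1 < 3) h).
by move: h; rewrite (edge_card2 h1).
Qed.

Lemma adj_edge v (i j : I) : adj_at v i j ->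
  exists2 w, w != v & [set v; w] \in edges_of (face i) /\ [set v; w] \in edges_of (face j).
Proof.
move=> /and3P [vi vj /hasP [e he /andP [ve hej]]].
have [w wv ew] := card2_split (edge_card2 he) ve.
by exists w => //; rewrite -ew.
Qed.

Lemma set2_inj (T : finType) (v a b : T) : a != v -> [set v; a] = [set v; b] -> a = b.
Proof.
move=> av h; have : a \in [set v; b] by rewrite -h set22.
by rewrite !inE (negbTE av) => /eqP.
Qed.

Definition lstr v (O T1 T2 T3 T4 : I) (a x y z b : V) : Prop :=
 [/\ size (face O) = 8 /\ [/\ size (face T1) = 3, size (face T2) = 3, size (face T3) = 3 & size (face T4) = 3],
   (forall i : I, v \in face i -> i \in [:: O; T1; T2; T3; T4]) /\ uniq [:: O; T1; T2; T3; T4],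
   [/\ S T1 = [set v; a; x], S T2 = [set v; x; y], S T3 = [set v; y; z] & S T4 = [set v; z; b]],
   [/\ v \in S O, [set v; a] \in edges_of (face O), [set v; b] \in edges_of (face O) &
       forall e, e \in edges_of (face O) -> v \in e -> e = [set v; a] \/ e = [set v; b]] &
   uniq [:: v; a; x; y; z; b]].

Ltac neqI hu := apply: contraTneq hu => ->; rewrite /= !inE ?eqxx ?orbT ?andbF //.

Lemma canon v (O T1 T2 T3 T4 : I) :
  size (face O) = 8 -> size (face T1) = 3 -> size (face T2) = 3 -> size (face T3) = 3 ->
  size (face T4) = 3 ->
  (forall i : I, v \in face i -> i \in [:: O; T1; T2; T3; T4]) -> uniq [:: O; T1; T2; T3; T4] ->
  adj_at v O T1 -> adj_at v T1 T2 -> adj_at v T2 T3 -> adj_at v T3 T4 -> adj_at v T4 O ->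
  exists a x y z b, lstr v O T1 T2 T3 T4 a x y z b.
Proof.
move=> sO s1 s2 s3 s4 hm hu h01 h12 h23 h34 h40.
have [a av [aO a1]] := adj_edge h01.
have [x xv [x1 x2]] := adj_edge h12.
have [y yv [y2 y3]] := adj_edge h23.
have [z zv [z3 z4]] := adj_edge h34.
have [b bv [b4 bO]] := adj_edge h40.
have [O1 O2 O3 O4] : [/\ O != T1, O != T2, O != T3 & O != T4] by split; neqI hu.
have [E12 E13 E14] : [/\ T1 != T2, T1 != T3 & T1 != T4] by split; neqI hu.
have [E23 E24 E34] : [/\ T2 != T3, T2 != T4 & T3 != T4] by split; neqI hu.
have ax : a != x by apply/eqP => e; subst x; apply: (three_faces O1 E12 O2 aO a1 x2).
have ay : a != y by apply/eqP => e; subst y; apply: (three_faces O1 E12 O2 aO a1 y2).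
have az : a != z by apply/eqP => e; subst z; apply: (three_faces O1 E13 O3 aO a1 z3).
have ab : a != b by apply/eqP => e; subst b; apply: (three_faces O1 E14 O4 aO a1 b4).
have xy : x != y by apply/eqP => e; subst y; apply: (three_faces E12 E23 E13 x1 x2 y3).
have xz : x != z by apply/eqP => e; subst z; apply: (three_faces E12 E23 E13 x1 x2 z3).
have xb : x != b by apply/eqP => e; subst b; apply: (three_faces E12 E24 E14 x1 x2 b4).
have yz : y != z by apply/eqP => e; subst z; apply: (three_faces E23 E34 E24 y2 y3 z4).
have yb : y != b by apply/eqP => e; subst b; apply: (three_faces E23 E34 E24 y2 y3 b4).
have zb : z != b by apply/eqP => e; subst b; apply: (three_faces O3 E34 O4 bO z3 z4).
have S1 : S T1 = [set v; a; x].
  apply: set3_eqE; rewrite ?cardS ?(eq_sym v) //.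
  - exact: edge_sub a1 (set21 _ _).
  - exact: edge_sub a1 (set22 _ _).
  - exact: edge_sub x1 (set22 _ _).
have S2 : S T2 = [set v; x; y].
  apply: set3_eqE; rewrite ?cardS ?(eq_sym v) //.
  - exact: edge_sub x2 (set21 _ _).
  - exact: edge_sub x2 (set22 _ _).
  - exact: edge_sub y2 (set22 _ _).
have S3 : S T3 = [set v; y; z].
  apply: set3_eqE; rewrite ?cardS ?(eq_sym v) //.
  - exact: edge_sub y3 (set21 _ _).
  - exact: edge_sub y3 (set22 _ _).
  - exact: edge_sub z3 (set22 _ _).
have S4 : S T4 = [set v; z; b].
  apply: set3_eqE; rewrite ?cardS ?(eq_sym v) //.
  - exact: edge_sub z4 (set21 _ _).
  - exact: edge_sub z4 (set22 _ _).
  - exact: edge_sub b4 (set22 _ _).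
have vO : v \in face O by apply: edge_mem aO (set21 _ _).
have [uO hO] := face_ok O.
have [e1 e2 n12] := edge_through_in v uO hO vO.
set n1 := nth v _ _ in e1 n12; set n2 := nth v _ _ in e2 n12.
have ET : forall e, e \in edges_of (face O) -> v \in e -> e = [set v; n1] \/ e = [set v; n2].
  by move=> e he ve; apply: edge_through.
have Eab : forall e, e \in edges_of (face O) -> v \in e -> e = [set v; a] \/ e = [set v; b].
  move=> e he ve.
  have a12 := ET _ aO (set21 _ _); have b12 := ET _ bO (set21 _ _).
  case: (ET _ he ve) => ->; case: a12 => ha; case: b12 => hb;
    try (by left); try (by right);
    by exfalso; move/negP: ab; apply; apply/eqP; apply: (set2_inj av); rewrite ha hb.
exists a, x, y, z, b; split.
- by split.
- by split.
- by split.
- by split; rewrite ?inE.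
rewrite /= !inE !negb_or !(eq_sym v) av xv yv zv bv ax ay az ab xy xz xb yz yb zb.
by [].
Qed.

Ltac memtac hm := move=> ? /hm; rewrite !inE; case/orP => [|/orP[|/orP[|/orP[|]]]] /eqP->; rewrite ?eqxx ?orbT.

Lemma extract v : semi_equivelar_of_type F [:: 3; 3; 3; 3; 8] ->
  exists O T1 T2 T3 T4 a x y z b, lstr v O T1 T2 T3 T4 a x y z b.
Proof.
move=> /(_ v) [c [/and3P [hu /forallP hm ha]] [k hs]].
have hm' : forall i : I, v \in face i -> i \in c by move=> i vi; have := hm i; rewrite vi => /eqP <-.
have : size c = 5 by case: hs => /(congr1 size); rewrite size_map size_rot.
case: c hu hm' ha hs {hm} => [|c0 [|c1 [|c2 [|c3 [|c4 [|? ?]]]]]] // hu hm ha hs _.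
move: ha => /= /andP [h01 /andP [h12 /andP [h23 /andP [h34 /andP [h40 _]]]]].
rewrite /= in hs.
have E : [:: size (face c0); size (face c1); size (face c2); size (face c3); size (face c4)] \in
   [:: [:: 8;3;3;3;3]; [:: 3;8;3;3;3]; [:: 3;3;8;3;3]; [:: 3;3;3;8;3]; [:: 3;3;3;3;8]].
  by case: hs; case: k => [|[|[|[|[|k]]]]] -> //; rewrite rot_oversize.
move: E; rewrite !inE; case/orP => [|/orP[|/orP[|/orP[|]]]] /eqP [s0 s1 s2 s3 s4].
- exists c0, c1, c2, c3, c4; apply: canon => //; try by memtac hm.
- exists c1, c2, c3, c4, c0; apply: canon => //; try by memtac hm.
  by rewrite -(rot_uniq 1) in hu.
- exists c2, c3, c4, c0, c1; apply: canon => //; try by memtac hm.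
  by rewrite -(rot_uniq 2) in hu.
- exists c3, c4, c0, c1, c2; apply: canon => //; try by memtac hm.
  by rewrite -(rot_uniq 3) in hu.
- exists c4, c0, c1, c2, c3; apply: canon => //; try by memtac hm.
  by rewrite -(rot_uniq 4) in hu.
Qed.

End Map.

Lemma in31 (T : finType) (p q r : T) : p \in [set p; q; r]. Proof. by rewrite !inE eqxx. Qed.
Lemma in32 (T : finType) (p q r : T) : q \in [set p; q; r]. Proof. by rewrite !inE eqxx ?orbT. Qed.
Lemma in33 (T : finType) (p q r : T) : r \in [set p; q; r]. Proof. by rewrite !inE eqxx ?orbT. Qed.

Ltac contra_d := match goal with
 | E : ?u = ?v, H : is_true (?u != ?v) |- _ => by rewrite E eqxx in H
 | E : ?u = ?v, H : is_true (?v != ?u) |- _ => by rewrite E eqxx in H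
 end.

Lemma porbits_partition (T : finType) (s : {perm T}) : partition (porbits s) [set: T].
Proof.
apply/and3P; split.
- apply/eqP/setP => t; rewrite inE; apply/bigcupP; exists (porbit s t).
    by apply: imset_f.
  exact: porbit_id.
- apply/trivIsetP => A B /imsetP [u _ ->] /imsetP [w _ ->] ne.
  apply/pred0P => t /=; apply/negP => /andP [tu tw].
  rewrite -eq_porbit_mem in tu; rewrite -eq_porbit_mem in tw.
  by move: ne; rewrite -(eqP tu) -(eqP tw) eqxx.
- apply/negP => /imsetP [u _ e].
  by have := porbit_id s u; rewrite -e inE.
Qed.

Lemma porbits_uniform (T : finType) (s : {perm T}) k :
  (forall t, #|porbit s t| = k) -> #|T| = #|porbits s| * k.
Proof.
move=> h; rewrite -cardsT; apply: card_uniform_partition (porbits_partition s).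
by move=> A /imsetP [u _ ->].
Qed.

Lemma card_sum (T : finType) (A : {set T}) : #|A| = \sum_(t : T) (t \in A : nat).
Proof. by rewrite -sum1_card big_mkcond; apply: eq_bigr => t _; case: (t \in A). Qed.

Ltac seteq := apply/setP => ?; rewrite !inE; repeat (case: (_ == _)); done.

Lemma set3_cancel (T : finType) (v p q r s : T) : [set v; p; q] = [set v; r; s] ->
  v != p -> v != q -> v != r -> v != s -> [set p; q] = [set r; s].
Proof.
move=> h vp vq vr vs.
have e1 : [set p; q] = [set v; p; q] :\ v.
  by apply/setP => t; rewrite !inE; case: (t =P v) => [->|]; rewrite ?(negbTE vp) ?(negbTE vq) ?eqxx.
have e2 : [set r; s] = [set v; r; s] :\ v.
  by apply/setP => t; rewrite !inE; case: (t =P v) => [->|]; rewrite ?(negbTE vr) ?(negbTE vs) ?eqxx.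
by rewrite e1 e2 h.
Qed.

Lemma set2_eqP (T : finType) (p q r s : T) : [set p; q] = [set r; s] -> p != q ->
  (p = r /\ q = s) \/ (p = s /\ q = r).
Proof.
move=> h pq.
have : p \in [set r; s] by rewrite -h set21.
have : q \in [set r; s] by rewrite -h set22.
have : r \in [set p; q] by rewrite h set21.
have : s \in [set p; q] by rewrite h set22.
rewrite !inE => /orP [] /eqP hs /orP [] /eqP hr /orP [] /eqP hq /orP [] /eqP hp; subst;
  rewrite ?eqxx in pq; by auto.
Qed.

Section Struct.
Variables (V : finType) (F : seq (seq V)).
Hypothesis HP : polyhedral_map F.
Hypothesis HS : semi_equivelar_of_type F [:: 3; 3; 3; 3; 8].
Local Notation I := 'I_(size F).
Local Notation S := (@S V F).

Definition tup := (I * I * I * I * I * (V * V * V * V * V))%type.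
Definition lstrT v (t : tup) :=
  lstr v t.1.1.1.1.1 t.1.1.1.1.2 t.1.1.1.2 t.1.1.2 t.1.2 t.2.1.1.1.1 t.2.1.1.1.2 t.2.1.1.2 t.2.1.2 t.2.2.

Lemma extractT v : exists t, lstrT v t.
Proof.
have [O [T1 [T2 [T3 [T4 [a [x [y [z [b h]]]]]]]]]] := extract HP v HS.
by exists (O, T1, T2, T3, T4, (a, x, y, z, b)).
Qed.

Definition ls v : tup := proj1_sig (constructive_indefinite_description _ (extractT v)).
Lemma lsP v : lstrT v (ls v).
Proof. exact: proj2_sig (constructive_indefinite_description _ (extractT v)). Qed.

Definition o v := (ls v).1.1.1.1.1.
Definition t1 v := (ls v).1.1.1.1.2.
Definition t2 v := (ls v).1.1.1.2.
Definition t3 v := (ls v).1.1.2.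
Definition t4 v := (ls v).1.2.
Definition a v := (ls v).2.1.1.1.1.
Definition x v := (ls v).2.1.1.1.2.
Definition y v := (ls v).2.1.1.2.
Definition z v := (ls v).2.1.2.
Definition b v := (ls v).2.2.

Lemma L v : lstr v (o v) (t1 v) (t2 v) (t3 v) (t4 v) (a v) (x v) (y v) (z v) (b v).
Proof. exact: lsP. Qed.

Definition TS (T : {set V}) : bool := [exists i : I, (size (face i) == 3) && (S i == T)].
Definition OE (e : {set V}) : bool := [exists i : I, (size (face i) == 8) && (e \in edges_of (face i))].

Lemma dist v : uniq [:: v; a v; x v; y v; z v; b v].
Proof. by case: (L v). Qed.

Lemma tri_in v : [/\ TS [set v; a v; x v], TS [set v; x v; y v], TS [set v; y v; z v] & TS [set v; z v; b v]].
Proof.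
case: (L v) => [[_ [s1 s2 s3 s4]] _ [e1 e2 e3 e4] _ _].
by split; apply/existsP; [exists (t1 v) | exists (t2 v) | exists (t3 v) | exists (t4 v)];
  rewrite ?s1 ?s2 ?s3 ?s4 ?e1 ?e2 ?e3 ?e4 !eqxx.
Qed.

Lemma tri_cases v T : TS T -> v \in T ->
  [\/ T = [set v; a v; x v], T = [set v; x v; y v], T = [set v; y v; z v] | T = [set v; z v; b v]].
Proof.
move=> /existsP [i /andP [/eqP si /eqP <-]] vi.
case: (L v) => [[so _] [hm _] [e1 e2 e3 e4] _ _].
have := hm i; rewrite inE in vi => /(_ vi).
rewrite !inE; case/orP => [|/orP[|/orP[|/orP[|]]]] /eqP ei; rewrite ei in si *.
- by move: si; rewrite so.
- by constructor 1.
- by constructor 2.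
- by constructor 3.
- by constructor 4.
Qed.

Lemma TS_card T : TS T -> #|T| = 3.
Proof. by move=> /existsP [i /andP [/eqP si /eqP <-]]; rewrite (cardS HP) si. Qed.

Lemma oct_size v : size (face (o v)) = 8.
Proof. by case: (L v) => [[]]. Qed.

Lemma oct_mem v : v \in S (o v).
Proof. by case: (L v) => _ _ _ []. Qed.

Lemma oct_uniq v (i : I) : v \in S i -> size (face i) = 8 -> i = o v.
Proof.
move=> vi si; case: (L v) => [[so [s1 s2 s3 s4]] [hm _] _ _ _].
have := hm i; rewrite inE in vi => /(_ vi).
rewrite !inE; case/orP => [|/orP[|/orP[|/orP[|]]]] /eqP ei; rewrite ei in si * => //;
by move: si; rewrite ?s1 ?s2 ?s3 ?s4.
Qed.

Lemma oct_edges v : [set v; a v] \in edges_of (face (o v)) /\ [set v; b v] \in edges_of (face (o v)).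
Proof. by case: (L v) => _ _ _ []. Qed.

Lemma oct_edge_cases v e : e \in edges_of (face (o v)) -> v \in e -> e = [set v; a v] \/ e = [set v; b v].
Proof. by case: (L v) => _ _ _ [_ _ _ h] _; apply: h. Qed.

Lemma a_oct v : a v \in S (o v).
Proof. by apply: (edge_sub (oct_edges v).1); rewrite set22. Qed.
Lemma b_oct v : b v \in S (o v).
Proof. by apply: (edge_sub (oct_edges v).2); rewrite set22. Qed.

Lemma oct_same u v : u \in S (o v) -> o u = o v.
Proof. by move=> h; apply/esym/oct_uniq => //; apply: oct_size. Qed.

Lemma OE_oct e v : OE e -> v \in e -> e \in edges_of (face (o v)).
Proof.
move=> /existsP [i /andP [/eqP si he]] ve.
by have <- := oct_uniq (edge_sub he ve) si.
Qed.

Lemma OE_cases e v : OE e -> v \in e -> e = [set v; a v] \/ e = [set v; b v].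
Proof. by move=> he ve; apply: oct_edge_cases => //; apply: OE_oct. Qed.

Lemma OE_ab v : OE [set v; a v] /\ OE [set v; b v].
Proof.
by split; apply/existsP; exists (o v); rewrite oct_size eqxx /=; case: (oct_edges v).
Qed.

Lemma OE_sub e v p : OE e -> v \in e -> p \in e -> p \in S (o v).
Proof. by move=> he ve pe; apply: edge_sub (OE_oct he ve) pe. Qed.

Lemma dist15 v : [/\ v != a v, v != x v, v != y v, v != z v & v != b v] /\
  [/\ [/\ a v != x v, a v != y v, a v != z v & a v != b v],
      [/\ x v != y v, x v != z v & x v != b v] &
      [/\ y v != z v, y v != b v & z v != b v]].
Proof.
have := dist v => /= /andP [h1 /andP [h2 /andP [h3 /andP [h4 /andP [h5 _]]]]].
rewrite !inE !negb_or in h1 h2 h3 h4 h5.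
by case/and5P: h1 => -> -> -> -> ->; case/and4P: h2 => -> -> -> ->; case/and3P: h3 => -> -> ->;
  case/andP: h4 => -> ->; rewrite h5.
Qed.

Lemma TS_dist p q r : TS [set p; q; r] -> [/\ p != q, p != r & q != r].
Proof.
move/TS_card; case: (p =P q) => [->|/eqP pq].
  by rewrite setUid cards2; case: (_ != _).
case: (p =P r) => [->|/eqP pr].
  by rewrite setUAC setUid cards2; case: (_ != _).
case: (q =P r) => [->|/eqP qr] //.
by rewrite -setUA setUid cards2; case: (_ != _).
Qed.

Lemma lk w p q : TS [set w; p; q] ->
  [\/ [set p; q] = [set a w; x w], [set p; q] = [set x w; y w],
      [set p; q] = [set y w; z w] | [set p; q] = [set z w; b w]].
Proof.
move=> h; have [wp wq _] := TS_dist h.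
have [[wa wx wy wz wb] _] := dist15 w.
case: (tri_cases h (in31 _ _ _)) => e.
- by constructor 1; apply: (set3_cancel e).
- by constructor 2; apply: (set3_cancel e).
- by constructor 3; apply: (set3_cancel e).
- by constructor 4; apply: (set3_cancel e).
Qed.

Ltac dst w := let h := fresh "d" in have h := dist15 w;
  case: h => [[? ? ? ? ?] [[? ? ? ?] [? ? ?] [? ? ?]]].

Lemma lk_a w q : TS [set w; a w; q] -> q = x w.
Proof.
move=> h; have [_ _ aq] := TS_dist h; dst w.
by case: (lk h) => /set2_eqP-/(_ aq) [][e1 e2]; first [by auto | contra_d].
Qed.

Lemma lk_x w q : TS [set w; x w; q] -> q = a w \/ q = y w.
Proof.
move=> h; have [_ _ aq] := TS_dist h; dst w.
by case: (lk h) => /set2_eqP-/(_ aq) [][e1 e2]; first [by auto | contra_d].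
Qed.

Lemma lk_y w q : TS [set w; y w; q] -> q = x w \/ q = z w.
Proof.
move=> h; have [_ _ aq] := TS_dist h; dst w.
by case: (lk h) => /set2_eqP-/(_ aq) [][e1 e2]; first [by auto | contra_d].
Qed.

Lemma lk_z w q : TS [set w; z w; q] -> q = y w \/ q = b w.
Proof.
move=> h; have [_ _ aq] := TS_dist h; dst w.
by case: (lk h) => /set2_eqP-/(_ aq) [][e1 e2]; first [by auto | contra_d].
Qed.

Lemma lk_b w q : TS [set w; b w; q] -> q = z w.
Proof.
move=> h; have [_ _ aq] := TS_dist h; dst w.
by case: (lk h) => /set2_eqP-/(_ aq) [][e1 e2]; first [by auto | contra_d].
Qed.

Lemma lk_mem w p q : TS [set w; p; q] -> p \in [:: a w; x w; y w; z w; b w].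
Proof.
move=> h; have [_ _ pq] := TS_dist h.
by case: (lk h) => /set2_eqP-/(_ pq) [][e1 e2]; rewrite e1 !inE eqxx ?orbT.
Qed.

Lemma TS_perm12 p q r : TS [set p; q; r] = TS [set q; p; r].
Proof. by congr TS; seteq. Qed.
Lemma TS_perm13 p q r : TS [set p; q; r] = TS [set r; p; q].
Proof. by congr TS; seteq. Qed.
Lemma TS_perm23 p q r : TS [set p; q; r] = TS [set p; r; q].
Proof. by congr TS; seteq. Qed.

Lemma tri_oct3 p q r u : TS [set p; q; r] -> p \in S (o u) -> q \in S (o u) -> r \in S (o u) -> False.
Proof.
move=> h hp hq hr; have [pq pr qr] := TS_dist h.
move: h => /existsP [i /andP [/eqP si /eqP Si]].
have io : i != o u by apply/eqP => e; move: si; rewrite e oct_size.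
by apply: (inter3 HP io pq pr qr) => //; rewrite Si ?in31 ?in32 ?in33.
Qed.

Lemma tri_oct2 p q r u : TS [set p; q; r] -> p \in S (o u) -> q \in S (o u) -> r \notin S (o u) ->
  [set p; q] \in edges_of (face (o u)).
Proof.
move=> h hp hq hr; have [pq pr qr] := TS_dist h.
move: h => /existsP [i /andP [/eqP si /eqP Si]].
have io : i != o u by apply/eqP => e; move: si; rewrite e oct_size.
have E : S i :&: S (o u) = [set p; q].
  apply/setP => t; rewrite in_setI Si.
  case: (t =P p) => [->|tp]; first by rewrite in31 hp set21.
  case: (t =P q) => [->|tq]; first by rewrite in32 hq set22.
  have -> : t \in [set p; q] = false by rewrite !inE; apply/norP; split; apply/eqP.
  case: (t =P r) => [->|tr]; first by rewrite (negbTE hr) andbF.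
  have -> // : t \in [set p; q; r] = false.
  by rewrite !inE; apply/norP; split; [apply/norP; split|]; apply/eqP.
have [_ h2] : S i :&: S (o u) \in edges_of (face i) /\ S i :&: S (o u) \in edges_of (face (o u)).
  by apply: (inter2 HP io); rewrite E cards2 pq.
by rewrite -E.
Qed.

Lemma nx w : x w \notin S (o w).
Proof.
apply/negP => hx; case: (tri_in w) => h _ _ _.
by apply: (tri_oct3 h (oct_mem w) (a_oct w) hx).
Qed.

Lemma ny w : y w \notin S (o w).
Proof.
apply/negP => hy; case: (tri_in w) => _ h _ _; rewrite TS_perm23 in h.
have := tri_oct2 h (oct_mem w) hy (nx w) => /oct_edge_cases /(_ (set21 _ _)).
dst w.
have yw : y w != w by rewrite eq_sym.
by case=> /(set2_inj yw) e; contra_d.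
Qed.

Lemma nz w : z w \notin S (o w).
Proof.
apply/negP => hz; case: (tri_in w) => _ _ _ h.
by apply: (tri_oct3 h (oct_mem w) hz (b_oct w)).
Qed.

Lemma tri_M w u q : TS [set w; u; q] -> u \notin S (o w) -> u \in [set x w; y w; z w].
Proof.
move=> h hu; have := lk_mem h; rewrite !inE.
case/orP => [/eqP e|/orP [->|/orP [->|/orP[->|/eqP e]]]]; rewrite ?orbT //; by move: hu; rewrite e ?a_oct ?b_oct.
Qed.

Lemma M_notS w u : u \in [set x w; y w; z w] -> u \notin S (o w).
Proof.
move=> hm; apply/negP => hu; move: hm; rewrite !inE => /orP [/orP []|] /eqP e;
  [move: (nx w) | move: (ny w) | move: (nz w)]; by rewrite -e hu.
Qed.

Lemma M_tri w u : u \in [set x w; y w; z w] -> exists q, TS [set w; u; q].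
Proof.
case: (tri_in w) => h1 h2 h3 h4.
rewrite !inE => /orP [/orP []|] /eqP ->.
- by exists (a w); rewrite TS_perm23.
- by exists (x w); rewrite TS_perm23.
- by exists (y w); rewrite TS_perm23.
Qed.

Lemma notS_sym w u : u \notin S (o w) -> w \notin S (o u).
Proof.
move=> hu; apply/negP => hw.
by move: hu; rewrite (oct_same hw) oct_mem.
Qed.

Lemma Msym w u : u \in [set x w; y w; z w] -> w \in [set x u; y u; z u].
Proof.
move=> hm; have [q hq] := M_tri hm.
apply: (tri_M (q := q)); first by rewrite TS_perm12.
exact: notS_sym (M_notS hm).
Qed.

Lemma mid w p q : TS [set w; p; q] -> p \notin S (o w) -> q \notin S (o w) ->
  [set p; q] = [set x w; y w] \/ [set p; q] = [set y w; z w].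
Proof.
move=> h hp hq.
case: (lk h) => e; try by [left | right].
- have : a w \in [set p; q] by rewrite e set21.
  by rewrite !inE => /orP [] /eqP ea; [move: hp | move: hq]; rewrite -ea a_oct.
- have : b w \in [set p; q] by rewrite e set22.
  by rewrite !inE => /orP [] /eqP ea; [move: hp | move: hq]; rewrite -ea b_oct.
Qed.

Lemma OE_card e : OE e -> #|e| = 2.
Proof. by move=> /existsP [i /andP [_ he]]; apply: (edge_card2 HP he). Qed.

Lemma apex_edge p e : OE e -> TS (p |: e) -> p \notin e ->
  e = [set x p; y p] \/ e = [set y p; z p].
Proof.
move=> he ht pe.
have [u ue] : exists u, u \in e.
  by apply/set0Pn; rewrite -card_gt0 (OE_card he).
have [w wu ew] := card2_split (OE_card he) ue.
rewrite ew setUA in ht; rewrite ew in pe *.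
have hu : u \in S (o u) by apply: oct_mem.
have hw : w \in S (o u) by apply: (OE_sub he ue); rewrite ew set22.
have hp : p \notin S (o u) by apply/negP => hp; apply: (tri_oct3 ht hp hu hw).
have hu' : u \notin S (o p) by apply: notS_sym.
have hw' : w \notin S (o p).
  by apply: notS_sym; rewrite (oct_same hw).
exact: mid ht hu' hw'.
Qed.

Lemma U p : ~ (OE [set x p; y p] /\ OE [set y p; z p]).
Proof.
move=> [h1 h2]; set w := y p.
have hx : x p = a w \/ x p = b w.
  case: (OE_cases h1 (set22 _ _)) => e; [left | right];
  apply: set2_inj _ (etrans (setUC _ _) e); by dst p.
have hz : z p = a w \/ z p = b w.
  case: (OE_cases h2 (set21 _ _)) => e; [left | right];
  apply: set2_inj _ e; dst p; by rewrite eq_sym.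
case: (tri_in p) => _ t2 t3 _.
have t2' : TS [set w; x p; p] by rewrite TS_perm13 TS_perm23 in t2.
have t3' : TS [set w; z p; p] by rewrite TS_perm12 TS_perm23 in t3.
have e1 : x p = a w -> p = x w by move=> e; apply: lk_a; rewrite -e.
have e2 : x p = b w -> p = z w by move=> e; apply: lk_b; rewrite -e.
have e3 : z p = a w -> p = x w by move=> e; apply: lk_a; rewrite -e.
have e4 : z p = b w -> p = z w by move=> e; apply: lk_b; rewrite -e.
have [_ [_ [_ xz _] _]] := dist15 p.
have [_ [_ [_ xwzw _] _]] := dist15 w.
case: hx => ex; case: hz => ez.
- by move: xz; rewrite ex ez eqxx.
- by move: xwzw; rewrite -(e1 ex) -(e4 ez) eqxx.
- by move: xwzw; rewrite -(e3 ez) -(e2 ex) eqxx.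
- by move: xz; rewrite ex ez eqxx.
Qed.

Lemma tri_edge (i : I) u v : size (face i) = 3 -> u \in S i -> v \in S i -> u != v ->
  [set u; v] \in edges_of (face i).
Proof.
rewrite /S !inE; case: (face i) => [|p [|q [|r [|? ?]]]] //= _ hu hv uv.
rewrite /edges_of /=.
rewrite !inE in hu hv.
case/or3P: hu => /eqP eu; case/or3P: hv => /eqP ev; subst; rewrite ?eqxx in uv => //;
  first [by rewrite !inE eqxx ?orbT | by rewrite setUC !inE eqxx ?orbT].
Qed.

Lemma apex_uniq u v p p' : OE [set u; v] -> TS [set p; u; v] -> TS [set p'; u; v] -> p = p'.
Proof.
move=> he h1 h2; case: (p =P p') => // /eqP pp'; exfalso.
have [pu pv uv] := TS_dist h1; have [pu' pv' _] := TS_dist h2.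
move: h1 h2 => /existsP [i /andP [/eqP si /eqP Si]] /existsP [j /andP [/eqP sj /eqP Sj]].
have hk := OE_oct he (set21 u v).
have ij : i != j.
  apply/eqP => e; subst j.
  have : p \in [set p'; u; v] by rewrite -Sj Si in31.
  by rewrite !inE (negbTE pp') (negbTE pu) (negbTE pv).
have ik : i != o u by apply/eqP => e; move: si; rewrite e oct_size.
have jk : j != o u by apply/eqP => e; move: sj; rewrite e oct_size.
apply: (three_faces HP ij jk ik _ _ hk).
- by apply: tri_edge; rewrite ?Si ?in32 ?in33.
- by apply: tri_edge; rewrite ?Sj ?in32 ?in33.
Qed.

Lemma oct_connected (X : {set V}) u :
  (forall p q, OE [set p; q] -> p \in X -> q \in X) -> u \in X -> S (o u) \subset X.
Proof.
move=> C uX.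
set f := face (o u).
have sf : size f = 8 by apply: oct_size.
have uf : u \in f by have := oct_mem u; rewrite inE.
set j := index u f.
have jl : j < 8 by rewrite -sf index_mem.
have step : forall i, i < 8 -> nth u f i \in X -> nth u f (i.+1 %% 8) \in X.
  move=> i il hi; apply: (C _ _ _ hi).
  apply/existsP; exists (o u); rewrite oct_size eqxx /=.
  have il' : i < size f by rewrite sf.
  by have := edge_nth u il'; rewrite sf.
have chain : forall m, nth u f ((j + m) %% 8) \in X.
  elim => [|m IH]; first by rewrite addn0 modn_small // nth_index.
  have := step _ (ltn_pmod (j + m) (isT : 0 < 8)) IH.
  by rewrite -addn1 modnDml addn1 addnS.
apply/subsetP => t; rewrite inE => tf.
have := chain (index t f + 8 - j).
have -> : j + (index t f + 8 - j) = index t f + 8 by lia.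
rewrite modnDr modn_small ?nth_index //.
by rewrite -sf index_mem.
Qed.

Lemma card_OEs : #|[set e : {set V} | OE e]| = #|V|.
Proof.
set A := [set e : {set V} | OE e].
have h1 : \sum_(e : {set V}) \sum_(v : V) ((e \in A) && (v \in e) : nat) = #|A| * 2.
  rewrite (card_sum A) big_distrl /=; apply: eq_bigr => e _.
  case eA: (e \in A) => /=; last by rewrite big1.
  by rewrite -(card_sum e) OE_card //; rewrite inE in eA.
have h2 : \sum_(v : V) \sum_(e : {set V}) ((e \in A) && (v \in e) : nat) = #|V| * 2.
  rewrite -sum1_card big_distrl /=; apply: eq_bigr => v _.
  have -> : \sum_(e : {set V}) ((e \in A) && (v \in e) : nat) =
     #|[set e : {set V} | (e \in A) && (v \in e)]|.
    by rewrite card_sum; apply: eq_bigr => e _; rewrite inE.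
  have -> : [set e : {set V} | (e \in A) && (v \in e)] = [set [set v; a v]; [set v; b v]].
    apply/setP => e; rewrite !inE; apply/andP/orP.
    - by move=> [he ve]; case: (OE_cases he ve) => ->; [left | right].
    - by case=> /eqP ->; case: (OE_ab v) => k1 k2; rewrite ?k1 ?k2 set21.
  rewrite cards2; case: eqP => // e.
  have [[va _ _ _ _] [[_ _ _ ab] _ _]] := dist15 v.
  by move: ab; rewrite (set2_inj _ e) ?eqxx // eq_sym.
rewrite exchange_big /= in h1.
have e : #|A| * 2 = #|V| * 2 := etrans (esym h1) h2.
lia.
Qed.

Lemma Ex_all p : OE [set x p; y p] \/ OE [set y p; z p].
Proof.
set A := [set e : {set V} | OE e].
pose ap := fun e : {set V} => [pick q | TS (q |: e) && (q \notin e)].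
have ex_ap : forall e, e \in A -> exists q, TS (q |: e) && (q \notin e).
  move=> e; rewrite inE => he.
  have [u ue] : exists u, u \in e by apply/set0Pn; rewrite -card_gt0 (OE_card he).
  have [[ua ux _ _ _] [[ax _ _ _] [_ _ _] [_ _ zb]]] := dist15 u.
  case: (tri_in u) => t1 _ _ t4.
  case: (OE_cases he ue) => ->.
  - exists (x u); rewrite !inE negb_or (eq_sym _ u) ux (eq_sym _ (a u)) ax andbT.
    have -> : x u |: [set u; a u] = [set u; a u; x u] by seteq.
    by rewrite ?andbT.
  - exists (z u); rewrite !inE negb_or.
    have -> : (z u == u) = false.
      by apply/negbTE; rewrite eq_sym; have [[_ _ _ -> _] _] := dist15 u.
    rewrite zb andbT.
    have -> : z u |: [set u; b u] = [set u; z u; b u] by seteq.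
    by rewrite ?andbT.
have apS : forall e, e \in A -> exists2 q, ap e = Some q & TS (q |: e) && (q \notin e).
  move=> e eA; rewrite /ap; case: pickP => [q hq | hn]; first by exists q.
  by have [q hq] := ex_ap e eA; rewrite hn in hq.
have inj : {in A &, injective ap}.
  move=> e1 e2 h1 h2; have [q1 E1 H1] := apS e1 h1; have [q2 E2 H2] := apS e2 h2.
  rewrite E1 E2 => -[eq]; subst q2.
  move: h1 h2; rewrite !inE => h1 h2.
  case/andP: H1 => t1 n1; case/andP: H2 => t2 n2.
  case: (apex_edge h1 t1 n1) => E1'; case: (apex_edge h2 t2 n2) => E2';
    rewrite E1' E2' in h1 h2 *; try done; exfalso; apply: (U (p := q1)); by split.
set P := [set q : V | [exists e, (e \in A) && TS (q |: e) && (q \notin e)]].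
have sub : [set ap e | e in A] \subset [set Some q | q in P].
  apply/subsetP => _ /imsetP [e eA ->].
  have [q E H] := apS e eA; rewrite E; apply: imset_f.
  by rewrite inE; apply/existsP; exists e; rewrite eA.
have := subset_leq_card sub.
rewrite card_in_imset // card_OEs card_imset; last by move=> ? ? [].
move=> le.
have PT : p \in P.
  have : P = [set: V] by apply/eqP; rewrite eqEcard subsetT cardsT le.
  by move=> ->; rewrite inE.
move: PT; rewrite inE => /existsP [e /andP [/andP [eA t] n]].
rewrite inE in eA.
by case: (apex_edge eA t n) => <-; [left | right].
Qed.

Section Alg.
Hypothesis Ex : forall p, OE [set x p; y p] \/ OE [set y p; z p].

Definition al p := if OE [set x p; y p] then x p else z p.
Definition be p := if OE [set x p; y p] then z p else x p.

Lemma al_cases p : (OE [set x p; y p] /\ al p = x p /\ be p = z p) \/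
  (~~ OE [set x p; y p] /\ OE [set y p; z p] /\ al p = z p /\ be p = x p).
Proof.
rewrite /al /be; case: ifP => h; first by left.
by right; split => //; case: (Ex p) => //; rewrite h.
Qed.

Lemma al_OE p : OE [set y p; al p].
Proof. by case: (al_cases p) => [[h [-> _]]|[_ [h [-> _]]]] //; rewrite setUC. Qed.

Lemma be_nOE p : ~~ OE [set y p; be p].
Proof.
case: (al_cases p) => [[h [_ ->]]|[h [_ [_ ->]]]]; last by rewrite setUC.
by apply/negP => h'; apply: (U (conj h h')).
Qed.

Lemma al_tri p : TS [set p; y p; al p].
Proof.
case: (tri_in p) => _ t2 t3 _.
by case: (al_cases p) => [[_ [-> _]]|[_ [_ [-> _]]]] //; rewrite TS_perm23.
Qed.

Lemma be_tri p : TS [set p; y p; be p].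
Proof.
case: (tri_in p) => _ t2 t3 _.
by case: (al_cases p) => [[_ [_ ->]]|[_ [_ [_ ->]]]] //; rewrite TS_perm23.
Qed.

Lemma al_ne p : [/\ al p != y p, be p != y p, al p != be p, al p != p & be p != p].
Proof.
have [[vp vx vy vz vb] [[ax ay az ab] [xy xz xb] [yz yb zb]]] := dist15 p.
case: (al_cases p) => [[_ [-> ->]]|[_ [_ [-> ->]]]];
  by split; rewrite // eq_sym.
Qed.

Lemma al_M p : al p \in [set x p; y p; z p].
Proof. by case: (al_cases p) => [[_ [-> _]]|[_ [_ [-> _]]]]; rewrite !inE eqxx ?orbT. Qed.

Lemma be_M p : be p \in [set x p; y p; z p].
Proof. by case: (al_cases p) => [[_ [_ ->]]|[_ [_ [_ ->]]]]; rewrite !inE eqxx ?orbT. Qed.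

Lemma y_M p : y p \in [set x p; y p; z p].
Proof. by rewrite !inE eqxx ?orbT. Qed.

Lemma K0 c p : y p = c -> (p = x c /\ al p = a c) \/ (p = z c /\ al p = b c).
Proof.
move=> ec.
have h := al_OE p; rewrite ec in h.
have [an _ _ _ _] := al_ne p; rewrite ec in an.
have t := al_tri p; rewrite ec TS_perm12 TS_perm23 in t.
case: (OE_cases h (set21 _ _)) => /(set2_inj an) e; rewrite e in t.
- by left; split => //; apply: lk_a.
- by right; split => //; apply: lk_b.
Qed.

Lemma K1g v c : y v = c -> y c = be v.
Proof.
move=> ec.
have t : TS [set c; v; be v] by rewrite -ec TS_perm12; apply: be_tri.
have [_ _ nab _ _] := al_ne v.
case: (K0 ec) => [[e1 e2]|[e1 e2]].
- have t' : TS [set c; x c; be v] by rewrite -e1.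
  by case: (lk_x t') => e //; move: nab; rewrite e2 e eqxx.
- have t' : TS [set c; z c; be v] by rewrite -e1.
  by case: (lk_z t') => e //; move: nab; rewrite e2 e eqxx.
Qed.

Lemma K1 v : y (y v) = be v.
Proof. exact: K1g. Qed.

Lemma K2g v w c : be v = w -> y v = c -> y w = v.
Proof.
move=> ew ec.
have t0 : TS [set v; c; w] by rewrite -ew -ec; apply: be_tri.
have t : TS [set w; v; c] by rewrite TS_perm13 in t0.
have hv : v \notin S (o w) by apply: M_notS; apply: Msym; rewrite -ew; apply: be_M.
have hc : c \notin S (o w).
  apply/negP => hc.
  have t' : TS [set w; c; v] by rewrite TS_perm23.
  have he := tri_oct2 t' (oct_mem w) hc hv.
  have : OE [set c; w] by rewrite setUC; apply/existsP; exists (o w); rewrite oct_size eqxx.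
  by rewrite -ew -ec (negbTE (be_nOE v)).
have [wv' _ vc] := TS_dist t.
have excl : y w = c -> False.
  move=> ewc.
  have [[_ _ _ _ _] [[_ _ _ _] [cxy cxz _] [cyz _ _]]] := dist15 c.
  have wv := wv'.
  have t2 : TS [set c; v; w] by rewrite TS_perm13 TS_perm23 in t.
  case: (K0 ewc) => [[f1 _]|[f1 _]]; case: (K0 ec) => [[g1 _]|[g1 _]].
  + by move: wv; rewrite f1 g1 eqxx.
  + have t3 : TS [set c; z c; x c] by rewrite -f1 -g1.
    case: (lk_z t3) => e.
    * by move: cxy; rewrite e eqxx.
    * have [_ [[_ _ _ _] [_ _ xb] _]] := dist15 c.
      by move: xb; rewrite e eqxx.
  + have t3 : TS [set c; x c; z c] by rewrite -f1 -g1.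
    case: (lk_x t3) => e.
    * have [_ [[_ _ az _] _ _]] := dist15 c.
      by move: az; rewrite e eqxx.
    * by move: cyz; rewrite e eqxx.
  + by move: wv; rewrite f1 g1 eqxx.
case: (mid t hv hc) => /set2_eqP-/(_ vc) [][e1 e2].
- by exfalso; apply: excl.
- by [].
- by [].
- by exfalso; apply: excl.
Qed.

Lemma K2 v : y (be v) = v.
Proof. exact: (K2g (erefl _) (erefl _)). Qed.

Lemma K3g v d c : al v = d -> y v = c -> al d = v.
Proof.
move=> ed ec.
have hOE : OE [set c; d] by rewrite -ed -ec; apply: al_OE.
have t : TS [set v; c; d] by rewrite -ed -ec; apply: al_tri.
have [vc vd cd] := TS_dist t.
have hc : c = a d \/ c = b d.
  have dc : c != d by [].
  case: (OE_cases hOE (set22 _ _)) => e; [left | right];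
    apply: (set2_inj dc); by rewrite -e setUC.
have td : TS [set d; c; v] by rewrite TS_perm13 TS_perm23 in t.
have hv : v = x d \/ v = z d.
  by case: hc => e; rewrite e in td; [left; apply: lk_a | right; apply: lk_b].
have [n [hn tn]] : exists n, (n = a v \/ n = b v) /\ TS [set d; v; n].
  case: (tri_in v) => t1 _ _ t4.
  case: (al_cases v) => [[_ [e _]]|[_ [_ [e _]]]]; rewrite ed in e.
  - exists (a v); split; first by left.
    by rewrite e -TS_perm13.
  - exists (b v); split; first by right.
    by rewrite e TS_perm12.
have nS : n \in S (o v) by case: hn => ->; rewrite ?a_oct ?b_oct.
have dM : d \notin S (o v) by apply: M_notS; rewrite -ed; apply: al_M.
have ny' : n = y d.
  have excl : n \in S (o d) -> False.
    move=> h; move: dM; rewrite -(oct_same nS) (oct_same h).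
    by rewrite oct_mem.
  case: hv => e; rewrite e in tn.
  - by case: (lk_x tn) => // e'; exfalso; apply: excl; rewrite e' a_oct.
  - by case: (lk_z tn) => // e'; exfalso; apply: excl; rewrite e' b_oct.
have hO : OE [set y d; v].
  rewrite -ny' setUC; case: hn => ->; by case: (OE_ab v).
case: hv => e; case: (al_cases d) => [[h1 [h2 _]]|[h1 [h2 [h3 _]]]].
- by rewrite h2.
- by move: h1; rewrite -e setUC hO.
- by exfalso; apply: (U (conj h1 _)); rewrite -e.
- by rewrite h3.
Qed.

Lemma K3 v : al (al v) = v.
Proof. exact: (K3g (erefl _) (erefl _)). Qed.

Definition sg v := al (be v).

Lemma y3 v : y (y (y v)) = v.
Proof. by rewrite (K1 v) K2. Qed.

Lemma K4 v : sg v = a v \/ sg v = b v.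
Proof.
have e := K2 v; set w := be v in e.
have h := al_OE w; rewrite e in h.
have [ne _ _ _ _] := al_ne w; rewrite e in ne.
by rewrite /sg -/w; case: (OE_cases h (set21 _ _)) => /(set2_inj ne) ->; [left | right].
Qed.

Lemma sg_ne v : sg v != v.
Proof.
have [[va _ _ _ vb] _] := dist15 v.
by case: (K4 v) => ->; rewrite eq_sym.
Qed.

Lemma K5 v : sg (sg v) != v.
Proof.
apply/negP => /eqP h.
set u := sg v in h.
have e1 := K2 v; have e2 := K2 u.
have o1 : OE [set v; u] by rewrite -{1}e1; apply: al_OE.
have tr1 : TS [set be v; v; u] by rewrite -{2}e1; apply: al_tri.
have tr2 : TS [set be u; v; u].
  by rewrite TS_perm23 -{2}e2; move: (al_tri (be u)); rewrite /sg in h; rewrite h.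
have := apex_uniq o1 tr1 tr2 => ew.
have : u = v by rewrite -e2 -ew e1.
move=> uv; have := sg_ne v; by rewrite -/u uv eqxx.
Qed.

Lemma y_inj : injective y.
Proof. by apply: (can_inj (g := fun v => y (y v))) => v; apply: y3. Qed.

Lemma al_inj : injective al.
Proof. exact: (can_inj K3). Qed.

Definition yP := perm y_inj.
Definition aP := perm al_inj.
Definition sP := (yP * yP * aP)%g.

Lemma sPE v : sP v = sg v.
Proof. by rewrite /sP !permM !permE /sg K1. Qed.

Lemma porbit_aP t : porbit aP t = [set t; al t].
Proof.
apply/setP => u; apply/porbitP/idP.
- move=> [i ->]; rewrite permX.
  elim: i => [|i IH] /=; first by rewrite set21.
  move: IH; rewrite !inE permE => /orP [] /eqP ->; by rewrite ?K3 eqxx ?orbT.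
- rewrite !inE => /orP [] /eqP ->; [exists 0 | exists 1]; by rewrite ?expg0 ?perm1 ?expg1 ?permE.
Qed.

Lemma card_porbit_aP t : #|porbit aP t| = 2.
Proof.
have [_ _ _ ne _] := al_ne t.
by rewrite porbit_aP cards2 eq_sym ne.
Qed.

Lemma iter_sg_oct i v : o (iter i sg v) = o v.
Proof.
elim: i => [|i IH] //=.
have h : sg (iter i sg v) \in S (o (iter i sg v)).
  by case: (K4 (iter i sg v)) => ->; rewrite ?a_oct ?b_oct.
by rewrite (oct_same h) IH.
Qed.

Lemma porbit_sP v : porbit sP v = S (o v).
Proof.
apply/eqP; rewrite eqEsubset; apply/andP; split.
  apply/subsetP => u /porbitP [i ->].
  rewrite permX.
  have -> : iter i sP v = iter i sg v by elim: i => [|i IH] //=; rewrite IH sPE.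
  by rewrite -(iter_sg_oct i v) oct_mem.
apply: oct_connected; last exact: porbit_id.
set X := porbit sP v.
have eX : forall w, w \in X -> porbit sP w = X by move=> w wX; apply/eqP; rewrite eq_porbit_mem.
have cl1 : forall w, w \in X -> sg w \in X.
  move=> w wX; rewrite -sPE -(eX w wX).
  by have := mem_porbit sP 1 w; rewrite expg1.
have cl2 : forall w, w \in X -> (sP^-1)%g w \in X.
  move=> w wX; rewrite -(eX w wX).
  by have := mem_porbit (sP^-1)%g 1 w; rewrite expg1 (porbitV sP w).
have nb : forall w, w \in X -> a w \in X /\ b w \in X.
  move=> w wX; set u := (sP^-1)%g w.
  have su : sg u = w by rewrite -sPE /u permKV.
  have uX : u \in X by apply: cl2.
  have uw : u != w by rewrite -su eq_sym sg_ne.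
  have hu : u = a w \/ u = b w.
    have o1 : OE [set u; w] by case: (K4 u) => e; rewrite -su e; case: (OE_ab u).
    case: (OE_cases o1 (set22 _ _)) => e; [left | right];
      by apply: (set2_inj uw); rewrite -e setUC.
  have hs : sg w != u by rewrite -{1}su; apply: K5.
  case: (K4 w) => e.
  - split; first by rewrite -e; apply: cl1.
    case: hu => hu; last by rewrite -hu.
    by move: hs; rewrite e hu eqxx.
  - split; last by rewrite -e; apply: cl1.
    case: hu => hu; first by rewrite -hu.
    by move: hs; rewrite e hu eqxx.
move=> p q h pX.
have pq : q != p.
  apply/negP => /eqP e; move: (OE_card h); rewrite e setUid cards1 //.
case: (OE_cases h (set21 _ _)) => /(set2_inj pq) ->; by case: (nb p pX).
Qed.

Lemma card_porbit_sP v : #|porbit sP v| = 8.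
Proof. by rewrite porbit_sP (cardS HP) oct_size. Qed.

Lemma parity_contra : #|V| = 24 -> False.
Proof.
move=> n24.
have h1 := porbits_uniform card_porbit_aP.
have h2 := porbits_uniform card_porbit_sP.
have c1 : #|porbits aP| = 12 by lia.
have c2 : #|porbits sP| = 3 by lia.
have : odd_perm sP = odd_perm aP.
  by rewrite /sP !odd_permM addbb.
by rewrite /odd_perm n24 c1 c2.
Qed.

End Alg.

Lemma face_size (i : I) : size (face i) = 3 \/ size (face i) = 8.
Proof.
have [_ hs] := face_ok HP i.
have [w wf] : exists w, w \in face i.
  by case: (face i) hs => [|w ?] //; exists w; rewrite inE eqxx.
case: (L w) => [[so [s1 s2 s3 s4]] [hm _] _ _ _].
have := hm i wf; rewrite !inE.
by case/orP => [|/orP[|/orP[|/orP[|]]]] /eqP ->; [right | left | left | left | left].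
Qed.

Lemma vtri v : [set i : I | (size (face i) == 3) && (v \in S i)] = [set i in [:: t1 v; t2 v; t3 v; t4 v]].
Proof.
case: (L v) => [[so [s1 s2 s3 s4]] [hm _] [e1 e2 e3 e4] _ _].
apply/setP => i; rewrite !inE; apply/andP/idP.
- move=> [/eqP si vi]; have := hm i; rewrite ?inE in vi => /(_ vi).
  rewrite !inE; case/orP => [/eqP e|->] //.
  by move: si; rewrite e so.
- have [v1 v2 v3 v4] : [/\ v \in face (t1 v), v \in face (t2 v), v \in face (t3 v) & v \in face (t4 v)].
    split; [move: (in31 v (a v) (x v)); rewrite -e1 | move: (in31 v (x v) (y v)); rewrite -e2 |
            move: (in31 v (y v) (z v)); rewrite -e3 | move: (in31 v (z v) (b v)); rewrite -e4]; by rewrite inE.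
  by case/orP => [|/orP[|/orP[|]]] /eqP ->; split; rewrite ?s1 ?s2 ?s3 ?s4.
Qed.

Lemma voct v : [set i : I | (size (face i) == 8) && (v \in S i)] = [set o v].
Proof.
case: (L v) => [[so [s1 s2 s3 s4]] [hm _] _ [vo _ _ _] _].
apply/setP => i; rewrite !inE; apply/andP/idP.
- move=> [/eqP si vi]; apply/eqP; apply: (oct_uniq _ si); by rewrite inE.
- by move/eqP ->; rewrite so eqxx; move: vo; rewrite inE.
Qed.

Lemma card_vtri v : #|[set i : I | (size (face i) == 3) && (v \in S i)]| = 4.
Proof.
rewrite vtri cardsE; apply/card_uniqP.
by case: (L v) => _ [_ /= /andP [_ ->]].
Qed.

Lemma dcount k : (forall v, #|[set i : I | (size (face i) == k) && (v \in S i)]| = (if k == 3 then 4 else 1)) ->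
  #|[set i : I | size (face i) == k]| * k = #|V| * (if k == 3 then 4 else 1).
Proof.
move=> hv.
have h1 : \sum_(i : I) \sum_(v : V) ((size (face i) == k) && (v \in S i) : nat) =
   #|[set i : I | size (face i) == k]| * k.
  rewrite card_sum big_distrl /=; apply: eq_bigr => i _; rewrite inE.
  case ek: (size (face i) == k) => /=; last by rewrite big1.
  by rewrite -(card_sum (S i)) (cardS HP) (eqP ek) mul1n.
have h2 : \sum_(v : V) \sum_(i : I) ((size (face i) == k) && (v \in S i) : nat) =
   #|V| * (if k == 3 then 4 else 1).
  rewrite -sum1_card big_distrl /=; apply: eq_bigr => v _.
  rewrite -(hv v) card_sum mul1n; apply: eq_bigr => i _; by rewrite inE.
rewrite exchange_big /= in h1.
exact: etrans (esym h1) h2.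
Qed.

Lemma tri_count : #|[set i : I | size (face i) == 3]| * 3 = #|V| * 4.
Proof. by apply: (dcount (k := 3)) => v; apply: card_vtri. Qed.

Lemma oct_count : #|[set i : I | size (face i) == 8]| * 8 = #|V|.
Proof.
rewrite -[RHS]muln1; apply: (dcount (k := 8)) => v.
by rewrite voct cards1.
Qed.

Lemma faces_count : size F = #|[set i : I | size (face i) == 3]| + #|[set i : I | size (face i) == 8]|.
Proof.
have -> : [set i : I | size (face i) == 8] = ~: [set i : I | size (face i) == 3].
  apply/setP => i; rewrite !inE; by case: (face_size i) => ->.
by rewrite cardsC card_ord.
Qed.

Lemma size_sum : \sum_(i : I) size (face i) =
  #|[set i : I | size (face i) == 3]| * 3 + #|[set i : I | size (face i) == 8]| * 8.
Proof.
rewrite !card_sum !big_distrl -big_split /=; apply: eq_bigr => i _; rewrite !inE.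
by case: (face_size i) => ->.
Qed.

Lemma edge_count : #|edge_set F| * 2 = \sum_(i : I) size (face i).
Proof.
have h1 : \sum_(e : {set V}) \sum_(i : I) (e \in edges_of (face i) : nat) = #|edge_set F| * 2.
  rewrite card_sum big_distrl /=; apply: eq_bigr => e _.
  transitivity #|[set i : I | e \in edges_of (face i)]|.
    by rewrite card_sum; apply: eq_bigr => i _; rewrite inE.
  have -> : #|[set i : I | e \in edges_of (face i)]| = count (fun g => e \in edges_of g) F.
    by rewrite (count_card _ _ [::]).
  rewrite /edge_set inE /is_edge.
  case: hasP => [[g gF eg]|hn].
    by case: HP => _ [_ Hc _ _ _]; rewrite (Hc g e gF eg).
  apply/eqP; rewrite mul0n -leqn0 leqNgt -has_count; apply/hasP => -[g gF eg].
  by apply: hn; exists g.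
have h2 : \sum_(i : I) \sum_(e : {set V}) (e \in edges_of (face i) : nat) = \sum_(i : I) size (face i).
  apply: eq_bigr => i _.
  transitivity #|[set e | e \in edges_of (face i)]|.
    by rewrite card_sum; apply: eq_bigr => e _; rewrite inE.
  rewrite cardsE.
  have [u hs] := face_ok HP i.
  by rewrite (card_uniqP (edges_uniq u hs)) size_edges.
rewrite exchange_big /= in h1.
exact: etrans (esym h1) h2.
Qed.

Lemma V24 : euler_char F = (-1)%R -> #|V| = 24.
Proof.
rewrite /euler_char => he.
have h1 := tri_count; have h2 := oct_count; have h3 := faces_count.
have h4 := edge_count; rewrite size_sum in h4.
lia.
Qed.

End Struct.

Unset Implicit Arguments.

Theorem lemma4p1 (V : finType) (F : seq (seq V)) :
  polyhedral_map F -> euler_char F = (-1)%R ->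
  ~ semi_equivelar_of_type F [:: 3; 3; 3; 3; 8].
Proof.
move=> HP he HS.
exact: (parity_contra (Ex_all HP HS) (V24 HP HS he)).
Qed.
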